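(* Let $A\subset\mathbb{N}\setminus\{1\}$ and let $M\subset\ell^\infty$ be a $2$-dimensional linear subspace such that $|L_z|\in A$ for every $z\in M\setminus\{0\}$. Put $$n_1=\min\{|L_z|: z\in M\setminus\{0\}\},\qquad n_2=\max\{|L_z|: z\in M\}.$$ Then $n_1,n_2\in A$ and the open interval $(n_2-n_1,n_2)$ contains an element of $A$.
   Context: $\ell^\infty$ is the space of bounded real sequences with the sup norm. For $x\in\ell^\infty$, $L_x$ denotes the set of accumulation points (subsequential limits) of $x$, and $|L_x|$ its cardinality. *)

(* Defs.v *)
From Stdlib Require Import Reals List.
Import ListNotations.
Open Scope R_scope.

Definition bounded_seq (x : nat -> R) : Prop :=
  exists B : R, forall n, Rabs (x n) <= B.

(* l is an accumulation point (subsequential limit) of x: l is in L_x. *)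
Definition acc_pt (x : nat -> R) (l : R) : Prop :=
  exists phi : nat -> nat,
    (forall n, (phi n < phi (S n))%nat) /\ Un_cv (fun n => x (phi n)) l.

Definition has_card (P : R -> Prop) (k : nat) : Prop :=
  exists s : list R, NoDup s /\ length s = k /\ (forall y, P y <-> In y s).

Definition lincomb (a b : R) (u v : nat -> R) : nat -> R :=
  fun n => a * u n + b * v n.

(* u, v are linearly independent (so span{u,v} is 2-dimensional). *)
Definition lin_indep2 (u v : nat -> R) : Prop :=
  forall a b : R, (forall n, lincomb a b u v n = 0) -> a = 0 /\ b = 0.

(* Main.v *)
Require Import Defs.
From Stdlib Require Import Reals List.
From Stdlib Require Import Lra Lia Classical ClassicalEpsilon Rtopology.
Import ListNotations.
Open Scope R_scope.

Lemma sel_ex (w : nat -> R) (l : R) : ValAdh w l ->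
  forall k N : nat, exists p, (N <= p)%nat /\ Rabs (w p - l) < / (INR k + 1).
Proof.
  intros H k N.
  assert (Hpos : 0 < / (INR k + 1)).
  { apply Rinv_0_lt_compat. pose proof (pos_INR k). lra. }
  destruct (H (disc l (mkposreal _ Hpos)) N) as [p [Hp HV]].
  - exists (mkposreal _ Hpos). intros x Hx. exact Hx.
  - exists p. split; auto.
Qed.

Lemma BW_sub (w : nat -> R) (B : R) : (forall n, Rabs (w n) <= B) ->
  exists phi : nat -> nat, exists l,
    (forall n, (phi n < phi (S n))%nat) /\ Un_cv (fun n => w (phi n)) l.
Proof.
  intros HB.
  destruct (Bolzano_Weierstrass w (fun c => -B <= c <= B) (compact_P3 (-B) B))
    as [l Hl].
  { intro n. specialize (HB n). revert HB. unfold Rabs; destruct (Rcase_abs (w n)); lra. }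
  pose proof (sel_ex w l Hl) as HS.
  assert (Hf : forall kN : nat * nat, exists p, (snd kN <= p)%nat /\
     Rabs (w p - l) < / (INR (fst kN) + 1)).
  { intros [k N]. apply HS. }
  destruct (choice _ Hf) as [sel Hsel].
  set (phi := fix phi (n : nat) : nat :=
          match n with O => sel (O, O) | S m => sel (S m, S (phi m)) end).
  exists phi, l. split.
  - intro n. simpl. destruct (Hsel (S n, S (phi n))) as [H1 _]. simpl in H1. lia.
  - intros eps Heps.
    assert (Hk : exists K : nat, / eps < INR K).
    { destruct (archimed_cor1 eps Heps) as [K [H1 H2]].
      exists K. apply lt_INR in H2. simpl in H2.
      rewrite <- (Rinv_inv (INR K)). apply Rinv_lt_contravar; auto.
      apply Rmult_lt_0_compat; auto. apply Rinv_0_lt_compat; lra. }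
    destruct Hk as [K HK].
    exists K. intros n Hn. unfold Rdist.
    assert (Hn' : Rabs (w (phi n) - l) < / (INR n + 1)).
    { destruct n; simpl.
      - exact (proj2 (Hsel (O,O))).
      - exact (proj2 (Hsel (S n, S (phi n)))). }
    eapply Rlt_le_trans; [exact Hn'|].
    apply le_INR in Hn.
    assert (0 < INR K) by (pose proof (Rinv_0_lt_compat _ Heps); lra).
    rewrite <- (Rinv_inv eps).
    apply Rinv_le_contravar; [apply Rinv_0_lt_compat; auto|]. lra.
Qed.

Definition incr (phi : nat -> nat) := forall n, (phi n < phi (S n))%nat.

Lemma incr_ge phi : incr phi -> forall n, (n <= phi n)%nat.
Proof. intros H n; induction n; [lia|]. specialize (H n). lia. Qed.

Lemma incr_comp phi psi : incr phi -> incr psi -> incr (fun n => phi (psi n)).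
Proof.
  intros H1 H2 n.
  assert (forall a b, (a < b)%nat -> (phi a < phi b)%nat).
  { intros a b Hab. induction Hab. apply H1. specialize (H1 m). lia. }
  apply H, H2.
Qed.

Lemma sub_cv w l psi : Un_cv w l -> incr psi -> Un_cv (fun n => w (psi n)) l.
Proof.
  intros Hw Hp eps He. destruct (Hw eps He) as [N HN].
  exists N. intros n Hn. apply HN. pose proof (incr_ge psi Hp n). lia.
Qed.

Definition lin (a b : R) (p : R * R) : R := a * fst p + b * snd p.

Definition J (u v : nat -> R) (p : R * R) : Prop :=
  exists phi, incr phi /\ Un_cv (fun n => u (phi n)) (fst p) /\
              Un_cv (fun n => v (phi n)) (snd p).

Lemma cv_lin (x y : nat -> R) lx ly a b : Un_cv x lx -> Un_cv y ly ->
  Un_cv (fun n => a * x n + b * y n) (a * lx + b * ly).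
Proof.
  intros Hx Hy.
  apply CV_plus; apply CV_mult; auto; intros e He; exists O; intros;
  unfold Rdist; rewrite Rminus_diag, Rabs_R0; auto.
Qed.

Lemma acc_char u v a b l : bounded_seq u -> bounded_seq v ->
  (acc_pt (lincomb a b u v) l <-> exists p, J u v p /\ l = lin a b p).
Proof.
  intros [Bu Hu] [Bv Hv]. split.
  - intros [phi [Hphi Hcv]].
    destruct (BW_sub (fun n => u (phi n)) Bu (fun n => Hu _)) as [psi [x [Hpsi Hx]]].
    destruct (BW_sub (fun n => v (phi (psi n))) Bv (fun n => Hv _)) as [chi [y [Hchi Hy]]].
    exists (x, y). split.
    + exists (fun n => phi (psi (chi n))). split; [|split].
      * apply incr_comp; auto. apply incr_comp; auto.
      * simpl. exact (sub_cv _ _ _ Hx Hchi).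
      * simpl. exact Hy.
    + apply (UL_sequence (fun n => lincomb a b u v (phi (psi (chi n))))).
      * apply (sub_cv (fun n => lincomb a b u v (phi n))); auto.
        apply incr_comp; auto.
      * unfold lincomb, lin; simpl. apply cv_lin; auto.
        exact (sub_cv _ _ _ Hx Hchi).
  - intros [[x y] [[phi [Hphi [Hx Hy]]] ->]].
    exists phi. split; auto. unfold lincomb, lin. simpl. apply cv_lin; auto.
Qed.

Lemma finite_sub {T} (l : list T) (P : T -> Prop) :
  (forall y, P y -> In y l) -> exists l', NoDup l' /\ forall y, P y <-> In y l'.
Proof.
  revert P; induction l as [|a l IH]; intros P HP.
  - exists []. split; [constructor|]. intros y; split; [intros H; apply (HP y H)|intros []].
  - destruct (IH (fun y => P y /\ y <> a)) as [l' [Hnd Hl']].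
    { intros y [H1 H2]. destruct (HP y H1); [congruence|auto]. }
    destruct (classic (P a)) as [Ha|Ha].
    + exists (a :: l'). split.
      * constructor; auto. intro H. apply Hl' in H. tauto.
      * intros y. split.
        -- intros Hy. destruct (classic (y = a)); [left; auto|right; apply Hl'; auto].
        -- intros [<-|Hy]; auto. apply Hl' in Hy; tauto.
    + exists l'. split; auto. intros y. rewrite <- Hl'. split; [|tauto].
      intros Hy; split; auto. intros ->; auto.
Qed.

Lemma has_card_unique P k1 k2 : has_card P k1 -> has_card P k2 -> k1 = k2.
Proof.
  intros [s1 [N1 [L1 H1]]] [s2 [N2 [L2 H2]]]. subst.
  apply Nat.le_antisymm; apply NoDup_incl_length; auto; intros y Hy.
  - apply H2, H1, Hy.
  - apply H1, H2, Hy.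
Qed.

Lemma NoDup_map_inj {A B} (F : A -> B) l : NoDup l ->
  (forall x y, In x l -> In y l -> F x = F y -> x = y) -> NoDup (map F l).
Proof.
  induction 1 as [|a l Ha Hnd IH]; intros Hinj; simpl; constructor.
  - intros Hin. apply in_map_iff in Hin as [x [Hx Hxl]].
    assert (x = a) by (apply Hinj; simpl; auto). subst; auto.
  - apply IH. intros; apply Hinj; simpl; auto.
Qed.

Definition cnt (l : list (R*R)) (F : R*R -> R) : nat :=
  length (nodup Req_EM_T (map F l)).

Lemma cnt_le l F : (cnt l F <= length l)%nat.
Proof.
  unfold cnt. rewrite <- (length_map F l). apply NoDup_incl_length.
  apply NoDup_nodup. intros x Hx. apply nodup_In in Hx. auto.
Qed.

Lemma cnt_inj l F : NoDup l -> (forall x y, In x l -> In y l -> F x = F y -> x = y) ->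
  cnt l F = length l.
Proof.
  intros Hnd Hinj. apply Nat.le_antisymm; [apply cnt_le|].
  unfold cnt. rewrite <- (length_map F l). apply NoDup_incl_length.
  apply NoDup_map_inj; auto. intros x Hx. apply nodup_In. auto.
Qed.

Definition pdec (p q : R*R) : {p = q} + {p <> q}.
Proof. destruct (excluded_middle_informative (p = q)); auto. Defined.

Lemma cnt_lt l F p q : In p l -> In q l -> p <> q -> F p = F q ->
  (cnt l F < length l)%nat.
Proof.
  intros Hp Hq Hpq HF.
  apply Nat.le_lt_trans with (length (map F (remove pdec q l))).
  - unfold cnt. apply NoDup_incl_length. apply NoDup_nodup.
    intros x Hx. apply nodup_In in Hx. apply in_map_iff in Hx as [r [<- Hr]].
    destruct (pdec r q) as [->|Hrq].
    + rewrite <- HF. apply in_map. apply in_in_remove; auto.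
    + apply in_map. apply in_in_remove; auto.
  - rewrite length_map. apply remove_length_lt; auto.
Qed.

Lemma two_vals l F : (2 <= cnt l F)%nat ->
  exists p q, In p l /\ In q l /\ F p <> F q.
Proof.
  unfold cnt. pose proof (NoDup_nodup Req_EM_T (map F l)) as Hnd.
  destruct (nodup Req_EM_T (map F l)) as [|x [|y r]] eqn:E; simpl; intros H; try lia.
  assert (Hx : In x (nodup Req_EM_T (map F l))) by (rewrite E; simpl; auto).
  assert (Hy : In y (nodup Req_EM_T (map F l))) by (rewrite E; simpl; auto).
  apply nodup_In, in_map_iff in Hx as [p [Hp Hpl]].
  apply nodup_In, in_map_iff in Hy as [q [Hq Hql]].
  exists p, q. repeat split; auto. rewrite Hp, Hq. intros ->.
  inversion Hnd; subst. simpl in *. tauto.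
Qed.

Lemma argmax {T} (l : list T) (D : T -> Prop) (tau : T -> R) :
  (exists x, In x l /\ D x) ->
  exists x, In x l /\ D x /\ forall y, In y l -> D y -> tau y <= tau x.
Proof.
  induction l as [|a l IH]; intros [x [Hx HD]]; [destruct Hx|].
  destruct (classic (exists x, In x l /\ D x)) as [Hex|Hno].
  - destruct (IH Hex) as [m [Hm [HDm Hmax]]].
    destruct (Rle_dec (tau a) (tau m)).
    + destruct (classic (D a)).
      * exists m. repeat split; simpl; auto. intros y [<-|Hy] Hd; auto.
      * exists m. repeat split; simpl; auto. intros y [<-|Hy] Hd; auto; tauto.
    + destruct (classic (D a)) as [Da|Da].
      * exists a. repeat split; simpl; auto. intros y [<-|Hy] Hd; [lra|].
        specialize (Hmax y Hy Hd). lra.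
      * exists m. repeat split; simpl; auto. intros y [<-|Hy] Hd; auto; tauto.
  - destruct Hx as [<-|Hx]; [|exfalso; eauto].
    exists a. repeat split; simpl; auto. intros y [<-|Hy] Hd; [lra|].
    exfalso; eauto.
Qed.

Lemma list_bound (l : list R) : exists t, forall r, In r l -> r < t.
Proof.
  induction l as [|a l [t Ht]]; [exists 0; intros r []|].
  exists (Rmax (a + 1) t). intros r [<-|Hr].
  - pose proof (Rmax_l (a+1) t). lra.
  - pose proof (Rmax_r (a+1) t). specialize (Ht r Hr). lra.
Qed.

Lemma nat_min (Q : nat -> Prop) : (exists k, Q k) ->
  exists k, Q k /\ forall j, Q j -> (k <= j)%nat.
Proof.
  intros [k Hk]. revert Hk. induction k as [k IH] using (well_founded_induction Wf_nat.lt_wf). intros Hk.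
  destruct (classic (exists j, Q j /\ (j < k)%nat)) as [[j [Hj Hjk]]|Hno].
  - exact (IH j Hjk Hj).
  - exists k. split; auto. intros j Hj. destruct (Nat.le_gt_cases k j); auto.
    exfalso; eauto.
Qed.

Lemma comb (pts : list (R*R)) a1 b1 a2 b2 : NoDup pts ->
  (forall x y, In x pts -> In y pts -> lin a2 b2 x = lin a2 b2 y -> x = y) ->
  (2 <= cnt pts (lin a1 b1))%nat ->
  exists T, (cnt pts (lin (a2 + T * a1) (b2 + T * b1)) < length pts)%nat /\
    (length pts < cnt pts (lin (a2 + T * a1) (b2 + T * b1)) + cnt pts (lin a1 b1))%nat.
Proof.
  intros Hnd Hg H2.
  set (f := lin a1 b1) in *. set (g := lin a2 b2) in *.
  destruct (two_vals _ _ H2) as [p1 [q1 [Hp1 [Hq1 Hf1]]]].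
  destruct (argmax (list_prod pts pts) (fun pq => f (fst pq) <> f (snd pq))
     (fun pq => (g (snd pq) - g (fst pq)) / (f (fst pq) - f (snd pq))))
    as [[p0 q0] [Hin0 [HD0 Hmax]]].
  { exists (p1, q1). split; auto. apply in_prod; auto. }
  simpl in HD0. apply in_prod_iff in Hin0 as [Hp0 Hq0].
  set (T := (g q0 - g p0) / (f p0 - f q0)).
  exists T.
  set (h := lin (a2 + T * a1) (b2 + T * b1)).
  assert (Hh : forall x, h x = g x + T * f x).
  { intros x; unfold h, g, f, lin; ring. }
  assert (Hmax' : forall p q, In p pts -> In q pts -> f p <> f q ->
            (g q - g p) / (f p - f q) <= T).
  { intros p q Hp Hq Hpq. apply (Hmax (p, q)); auto. apply in_prod; auto. }
  split.
  - apply (cnt_lt _ _ p0 q0); auto.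
    + intros ->; auto.
    + rewrite !Hh. unfold T. field. intros H; apply HD0; lra.
  - set (nm := fun q => exists p, In p pts /\ h p = h q /\ f p < f q).
    destruct (finite_sub pts (fun q => In q pts /\ ~ nm q)) as [SL [HSnd HS]].
    { tauto. }
    destruct (finite_sub pts (fun q => In q pts /\ nm q)) as [NM [HNnd HN]].
    { tauto. }
    destruct (argmax pts (fun _ => True) (fun p => - f p)) as [pm [Hpm [_ Hmin]]].
    { exists p1; auto. }
    assert (L1 : (length pts <= length SL + length NM)%nat).
    { rewrite <- length_app. apply NoDup_incl_length; auto.
      intros x Hx. apply in_or_app. destruct (classic (nm x)).
      - right; apply HN; auto.
      - left; apply HS; auto. }
    assert (L2 : (length SL <= cnt pts h)%nat).
    { unfold cnt. rewrite <- (length_map h SL). apply NoDup_incl_length.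
      - apply NoDup_map_inj; auto. intros x y Hx Hy Hxy.
        apply HS in Hx as [Hx Hnx]. apply HS in Hy as [Hy Hny].
        assert (f x = f y).
        { destruct (Rtotal_order (f x) (f y)) as [Hl|[He|Hl]]; auto.
          - exfalso; apply Hny; exists x; repeat split; auto.
          - exfalso; apply Hnx; exists y; repeat split; auto. }
        apply Hg; auto. rewrite !Hh in Hxy. rewrite H in Hxy. lra.
      - intros z Hz. apply nodup_In. apply in_map_iff in Hz as [x [<- Hx]].
        apply in_map. apply HS in Hx; tauto. }
    assert (Key : forall q q', nm q -> In q' pts -> f q' = f q -> g q <= g q').
    { intros q q' [p [Hp [Hpq Hfpq]]] Hq' Hf.
      destruct (Rle_dec (g q) (g q')) as [|Hlt]; auto. exfalso.
      assert (Hb := Hmax' p q' Hp Hq' ltac:(lra)).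
      assert (Hc : g q' + T * f q' < g p + T * f p).
      { rewrite <- !Hh, Hpq, !Hh, Hf. lra. }
      set (r := (g q' - g p) / (f p - f q')) in Hb.
      assert (Hr : g q' - g p = r * (f p - f q')).
      { unfold r. field. lra. }
      nra. }
    assert (L3 : (S (length NM) <= cnt pts f)%nat).
    { unfold cnt. replace (S (length NM)) with (length (f pm :: map f NM))
        by (simpl; rewrite length_map; auto).
      apply NoDup_incl_length.
      - constructor.
        + intros Hin. apply in_map_iff in Hin as [x [Hx HxN]].
          apply HN in HxN as [_ [p [Hp [_ Hfp]]]].
          specialize (Hmin p Hp I). lra.
        + apply NoDup_map_inj; auto. intros x y Hx Hy Hxy.
          apply HN in Hx as [Hx Hnx]. apply HN in Hy as [Hy Hny].
          apply Hg; auto.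
          pose proof (Key x y Hnx Hy (eq_sym Hxy)).
          pose proof (Key y x Hny Hx Hxy). lra.
      - intros z [<-|Hz]; apply nodup_In.
        + apply in_map; auto.
        + apply in_map_iff in Hz as [x [<- Hx]]. apply in_map. apply HN in Hx; tauto. }
    lia.
Qed.

Theorem proposition2p2 (A : nat -> Prop) (hA1 : ~ A 1%nat)
  (u v : nat -> R) (hu : bounded_seq u) (hv : bounded_seq v)
  (hind : lin_indep2 u v)
  (hM : forall a b : R, (exists n, lincomb a b u v n <> 0) ->
        exists k : nat, has_card (acc_pt (lincomb a b u v)) k /\ A k) :
  exists n1 n2 : nat,
    ((exists a b : R, (exists n, lincomb a b u v n <> 0) /\
        has_card (acc_pt (lincomb a b u v)) n1) /\
     (forall (a b : R) (k : nat), (exists n, lincomb a b u v n <> 0) ->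
        has_card (acc_pt (lincomb a b u v)) k -> (n1 <= k)%nat)) /\
    ((exists a b : R, has_card (acc_pt (lincomb a b u v)) n2) /\
     (forall (a b : R) (k : nat),
        has_card (acc_pt (lincomb a b u v)) k -> (k <= n2)%nat)) /\
    A n1 /\ A n2 /\
    (exists m : nat, A m /\ (n2 < m + n1)%nat /\ (m < n2)%nat).
Proof.
  assert (nz : forall a b, (exists n, lincomb a b u v n <> 0) <-> ~ (a = 0 /\ b = 0)).
  { intros a b. split.
    - intros [n Hn] [-> ->]. apply Hn. unfold lincomb. ring.
    - intros H. apply NNPP. intros Hn. apply H. apply hind.
      intros n. apply NNPP. intros Hn'. apply Hn. exists n; auto. }
  destruct (hM 1 0) as [ku [[su [_ [_ Hsu]]] _]]. { apply nz. lra. }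
  destruct (hM 0 1) as [kv [[sv [_ [_ Hsv]]] _]]. { apply nz. lra. }
  destruct (finite_sub (list_prod su sv) (J u v)) as [pts [Hnd Hpts]].
  { intros [x y] Hj. apply in_prod.
    - apply Hsu. apply acc_char; auto. exists (x, y). split; auto. unfold lin; simpl; ring.
    - apply Hsv. apply acc_char; auto. exists (x, y). split; auto. unfold lin; simpl; ring. }
  assert (card : forall a b, has_card (acc_pt (lincomb a b u v)) (cnt pts (lin a b))).
  { intros a b. exists (nodup Req_EM_T (map (lin a b) pts)). split; [apply NoDup_nodup|].
    split; auto. intros y. rewrite acc_char, nodup_In, in_map_iff; auto.
    split.
    - intros [p [Hp ->]]. exists p. split; auto. apply Hpts; auto.
    - intros [p [<- Hp]]. exists p. split; auto. apply Hpts; auto. }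
  assert (cardu : forall a b k, has_card (acc_pt (lincomb a b u v)) k -> k = cnt pts (lin a b)).
  { intros a b k Hk. exact (has_card_unique _ _ _ Hk (card a b)). }
  destruct hu as [Bu Hbu].
  destruct (BW_sub (lincomb 1 0 u v) Bu) as [phi [l0 [Hphi Hl0]]].
  { intros n. unfold lincomb. replace (1 * u n + 0 * v n) with (u n) by ring. auto. }
  destruct (proj1 (acc_char u v 1 0 l0 (ex_intro _ Bu Hbu) hv))
    as [p00 [Hp00 _]].
  { exists phi; split; auto. }
  apply Hpts in Hp00.
  assert (cntA : forall a b, ~ (a = 0 /\ b = 0) ->
      A (cnt pts (lin a b)) /\ (2 <= cnt pts (lin a b))%nat).
  { intros a b Hab. destruct (hM a b) as [k [Hk HA]]. { apply nz; auto. }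
    apply cardu in Hk. subst k. split; auto.
    destruct (cnt pts (lin a b)) as [|[|c]] eqn:E; [exfalso| exfalso; auto |lia].
    unfold cnt in E. assert (Hin : In (lin a b p00) (nodup Req_EM_T (map (lin a b) pts))).
    { apply nodup_In, in_map; auto. }
    destruct (nodup Req_EM_T (map (lin a b) pts)); [destruct Hin|discriminate]. }
  destruct (list_bound (map (fun pq : (R*R)*(R*R) =>
      (fst (snd pq) - fst (fst pq)) / (snd (fst pq) - snd (snd pq))) (list_prod pts pts)))
    as [t Ht].
  assert (ginj : forall x y, In x pts -> In y pts -> lin 1 t x = lin 1 t y -> x = y).
  { intros [x1 x2] [y1 y2] Hx Hy Hxy. unfold lin in Hxy; simpl in Hxy.
    destruct (Req_dec x2 y2) as [<-|Hne].
    - f_equal. lra.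
    - exfalso.
      assert (Hin := Ht ((y1 - x1) / (x2 - y2))).
      assert (Heq : t = (y1 - x1) / (x2 - y2)).
      { field_simplify_eq; [lra|]. intros H; apply Hne; lra. }
      assert (((y1 - x1) / (x2 - y2)) < t).
      { apply Hin. apply in_map_iff. exists ((x1,x2),(y1,y2)). split; auto.
        apply in_prod; auto. }
      lra. }
  assert (cntg : cnt pts (lin 1 t) = length pts) by (apply cnt_inj; auto).
  destruct (nat_min (fun k => exists a b, ~ (a = 0 /\ b = 0) /\ cnt pts (lin a b) = k))
    as [n1 [[a1 [b1 [Hab1 Hn1]]] Hmin]].
  { exists (cnt pts (lin 1 0)), 1, 0. split; auto. lra. }
  destruct (cntA a1 b1 Hab1) as [HA1 H21]. rewrite Hn1 in HA1, H21.
  assert (Hlt : (n1 < length pts)%nat).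
  { rewrite <- Hn1 in H21. destruct (two_vals _ _ H21) as [p [q [Hp [Hq Hpq]]]].
    assert (Hne : p <> q) by (intros ->; auto).
    apply Nat.le_lt_trans with (cnt pts (lin (snd q - snd p) (fst p - fst q))).
    - apply Hmin. exists (snd q - snd p), (fst p - fst q). split; auto.
      intros [E1 E2]. apply Hne. destruct p, q; simpl in *. f_equal; lra.
    - apply (cnt_lt _ _ p q); auto. unfold lin. ring. }
  rewrite <- Hn1 in H21.
  destruct (comb pts a1 b1 1 t Hnd ginj H21) as [T [HT1 HT2]].
  rewrite Hn1 in HT2.
  exists n1, (length pts).
  split; [split|split; [split|]].
  - exists a1, b1. split; [apply nz; auto|]. rewrite <- Hn1; apply card.
  - intros a b k Hnz Hk. apply cardu in Hk. subst k. apply Hmin.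
    exists a, b. split; auto. apply nz; auto.
  - exists 1, t. rewrite <- cntg. apply card.
  - intros a b k Hk. apply cardu in Hk. subst k. apply cnt_le.
  - split; auto. split.
    + rewrite <- cntg. apply cntA. lra.
    + exists (cnt pts (lin (1 + T * a1) (t + T * b1))). split; [|split; auto].
      apply cntA. intros [E1 E2].
      assert (H2 : (2 <= cnt pts (lin (1 + T * a1) (t + T * b1)))%nat) by lia.
      destruct (two_vals _ _ H2) as [p [q [_ [_ Hpq]]]].
      apply Hpq. unfold lin. rewrite E1, E2. ring.
Qed.
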